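(* For all positive integers $s,k$ and all nonnegative integers $t$, $$\binom{s+k-1}{s}\sum_{j=0}^{t}\binom{j+s-1}{s-1}\binom{j+k-1}{k-1}=\binom{t+s}{s}\sum_{j=0}^{k-1}\binom{j+s-1}{s-1}\binom{t+j}{j}.$$ *)

(* Defs.v *)
From mathcomp Require Import all_boot.

(* Main.v *)
Require Import Defs.
From mathcomp Require Import all_boot.
From mathcomp Require Import zify.

Lemma binC' m n : 'C(m + n, m) = 'C(m + n, n).
Proof. by rewrite -(bin_sub (leq_addl m n)) addnK. Qed.

Lemma lemA a u b :
  (a + b).+1 * 'C(a + b, a) * 'C(u + b, b) =
  \sum_(0 <= j < b.+1) 'C(j + a, a) * (u * 'C((u + j).-1, u) + a.+1 * 'C(u + j, j)).
Proof.
elim: b => [|b IH].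
  rewrite big_nat1 !addn0 !binn bin0.
  case: u => [|u] /=; first by rewrite mul0n add0n !mul1n !muln1.
  by rewrite bin_small // muln0 add0n !muln1 mul1n.
rewrite big_nat_recr //= -IH.
have Fab : (a + b).+1 * 'C(a + b, a) = b.+1 * 'C(a + b.+1, a).
  rewrite (binC' a b) (binC' a b.+1) addnS.
  exact: (mul_bin_diag (a + b).+1 b).
have Fu : (u + b).+1 * 'C(u + b, b) = b.+1 * 'C(u + b.+1, b.+1).
  rewrite addnS. exact: (mul_bin_diag (u + b).+1 b).
have E1 : 'C((u + b.+1).-1, u) = 'C(u + b, b) by rewrite addnS /= (binC' u b).
have E2 : 'C(b.+1 + a, a) = 'C(a + b.+1, a) by rewrite addnC.
rewrite E1 E2 Fab.
move: Fu; set X := 'C(u + b, b); set Y := 'C(u + b.+1, b.+1); set V := 'C(a + b.+1, a).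
move=> Fu.
have -> : (a + b.+1).+1 = (a+b).+2 by rewrite addnS.
nia.
Qed.

Lemma lemM a b t :
  'C(a + b.+1, a.+1) * (\sum_(0 <= j < t.+1) 'C(j + a, a) * 'C(j + b, b))
  = 'C(t + a.+1, a.+1) * (\sum_(0 <= j < b.+1) 'C(j + a, a) * 'C(t + j, j)).
Proof.
have G : a.+1 * 'C(a + b.+1, a.+1) = (a + b).+1 * 'C(a + b, a).
  rewrite addnS -(mul_bin_diag (a + b).+1 a) //.
elim: t => [|t IH].
  rewrite big_nat1 !add0n !binn !muln1 mul1n.
  apply/eqP; rewrite -(eqn_pmul2l (ltn0Sn a)) G; apply/eqP.
  have := lemA a 0 b; rewrite add0n binn muln1 => ->.
  rewrite big_distrr /=.
  apply: eq_bigr => j _.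
  by rewrite mul0n !add0n binn !muln1 mulnC.
rewrite (big_nat_recr t.+1 0) //= mulnDr IH.
set P := \sum_(0 <= j < b.+1) 'C(j + a, a) * 'C(t + j, j).
set Q := \sum_(0 <= j < b.+1) 'C(j + a, a) * 'C(t + j, t.+1).
have HR : \sum_(0 <= j < b.+1) 'C(j + a, a) * 'C(t.+1 + j, j) = P + Q.
  rewrite /P /Q -big_split /=; apply: eq_bigr => j _.
  rewrite -(binC' t.+1 j) addSn binS (binC' t j); lia.
have HA : (a + b).+1 * 'C(a + b, a) * 'C(t.+1 + b, b) = t.+1 * Q + a.+1 * (P + Q).
  rewrite lemA -HR /Q !big_distrr -big_split /=; apply: eq_bigr => j _.
  rewrite addSn /=; lia.
have HN2 : 'C(t.+1 + a.+1, a.+1) = 'C(t + a.+1, a.+1) + 'C(t + a.+1, a).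
  by rewrite addSn binS.
have HM : 'C(t.+1 + a, a) = 'C(t + a.+1, a) by rewrite addSn addnS.
have HN : a.+1 * 'C(t + a.+1, a.+1) = t.+1 * 'C(t + a.+1, a).
  by rewrite mul_bin_left; congr (_ * _); lia.
rewrite HR HN2 HM.
move: HA HN G.
set K := 'C(a + b.+1, a.+1); set W := 'C(a + b, a); set Z := 'C(t.+1 + b, b).
set N := 'C(t + a.+1, a.+1); set M := 'C(t + a.+1, a).
move=> HA HN G.
apply/eqP; rewrite -(eqn_pmul2l (ltn0Sn a)); apply/eqP.
have H1 : a.+1 * (K * (M * Z)) = M * (t.+1 * Q + a.+1 * (P + Q)).
  rewrite -HA -G; nia.
have H2 : a.+1 * (N * Q) = t.+1 * M * Q by rewrite mulnA HN.
have H3 : a.+1 * (N * P) = t.+1 * M * P by rewrite mulnA HN.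
rewrite mulnDr H1 !mulnDl !mulnDr H3 !mulnA -!(mulnA a.+1) H2.
nia.
Qed.

Theorem mainTheorem10 (s k t : nat) (hs : 0 < s) (hk : 0 < k) :
  'C(s + k - 1, s) * (\sum_(0 <= j < t.+1) 'C(j + s - 1, s - 1) * 'C(j + k - 1, k - 1))
  = 'C(t + s, s) * (\sum_(0 <= j < k) 'C(j + s - 1, s - 1) * 'C(t + j, j)).
Proof.
case: s hs => // a _; case: k hk => // b _.
have -> : a.+1 + b.+1 - 1 = a + b.+1 by lia.
rewrite subn1 /= subn1 /=.
have E1 : forall j, j + a.+1 - 1 = j + a by move=> j; lia.
have E2 : forall j, j + b.+1 - 1 = j + b by move=> j; lia.
under eq_bigr do rewrite E1 E2.
under [in RHS]eq_bigr do rewrite E1.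
exact: lemM.
Qed.
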